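(* Suppose that the family of vectors $\{\varphi_i\}_{i=1}^M$ does norm retrieval in $\mathbb{R}^N$. Then for every $j\in\{1,\dots,M\}$, if $\varphi_j\notin\mathrm{span}\{\varphi_i: i\neq j\}$, then $\varphi_j$ is orthogonal to $\varphi_i$ for all $i\neq j$. Consequently, a basis of $\mathbb{R}^N$ does norm retrieval in $\mathbb{R}^N$ if and only if it is an orthogonal basis.
   Context: A family of vectors $\{\varphi_i\}_{i=1}^M$ in $\mathbb{R}^N$ does norm retrieval if for all $x,y\in\mathbb{R}^N$, $|\langle x,\varphi_i\rangle|=|\langle y,\varphi_i\rangle|$ for all $i$ implies $\|x\|=\|y\|$. *)

(* Defs.v *)
From HB Require Import structures.
From mathcomp Require Import all_boot all_order all_algebra.
From mathcomp Require Import reals.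
Set Implicit Arguments. Unset Strict Implicit. Unset Printing Implicit Defensive.
Import Order.TTheory GRing.Theory Num.Theory.
Local Open Scope ring_scope.

Definition dotv (R : realType) (N : nat) (x y : 'rV[R]_N) : R :=
  \sum_(k < N) x 0 k * y 0 k.

Definition normv (R : realType) (N : nat) (x : 'rV[R]_N) : R :=
  Num.sqrt (dotv x x).

Definition norm_retrieval (R : realType) (N M : nat) (phi : 'I_M -> 'rV[R]_N) : Prop :=
  forall x y : 'rV[R]_N,
    (forall i, `|dotv x (phi i)| = `|dotv y (phi i)|) -> normv x = normv y.

Definition fammx (R : realType) (N M : nat) (phi : 'I_M -> 'rV[R]_N) : 'M[R]_(M, N) :=
  \matrix_(i < M) phi i.

Definition is_basis (R : realType) (N M : nat) (phi : 'I_M -> 'rV[R]_N) : Prop :=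
  row_free (fammx phi) /\ row_full (fammx phi).

(* Main.v *)
Require Import Defs.
From HB Require Import structures.
From mathcomp Require Import all_boot all_order all_algebra.
From mathcomp Require Import reals.
From mathcomp Require Import ring lra.
Import Order.TTheory GRing.Theory Num.Theory.
Local Open Scope ring_scope.

Section Aux.
Context {R : realType} {N : nat}.
Implicit Types x y z : 'rV[R]_N.

Lemma dotvC x y : dotv x y = dotv y x.
Proof. by rewrite /dotv; apply: eq_bigr => k _; rewrite mulrC. Qed.

Lemma dotvDl x y z : dotv (x + y) z = dotv x z + dotv y z.
Proof. by rewrite /dotv -big_split; apply: eq_bigr => k _; rewrite mxE mulrDl. Qed.

Lemma dotvZl a x z : dotv (a *: x) z = a * dotv x z.
Proof. by rewrite /dotv mulr_sumr; apply: eq_bigr => k _; rewrite mxE mulrA. Qed.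

Lemma dotvNl x z : dotv (- x) z = - dotv x z.
Proof. by rewrite -scaleN1r dotvZl mulN1r. Qed.

Lemma dotvBl x y z : dotv (x - y) z = dotv x z - dotv y z.
Proof. by rewrite dotvDl dotvNl. Qed.

Lemma dotvDr x y z : dotv z (x + y) = dotv z x + dotv z y.
Proof. by rewrite !(dotvC z) dotvDl. Qed.

Lemma dotvZr a x z : dotv z (a *: x) = a * dotv z x.
Proof. by rewrite !(dotvC z) dotvZl. Qed.

Lemma dotvBr x y z : dotv z (x - y) = dotv z x - dotv z y.
Proof. by rewrite !(dotvC z) dotvBl. Qed.

Lemma dotv_suml (M : nat) (f : 'I_M -> 'rV[R]_N) z :
  dotv (\sum_(i < M) f i) z = \sum_(i < M) dotv (f i) z.
Proof.
rewrite /dotv exchange_big; apply: eq_bigr => k _.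
by rewrite summxE mulr_suml.
Qed.

Lemma dotv_ge0 x : 0 <= dotv x x.
Proof. by apply: sumr_ge0 => k _; rewrite -expr2 sqr_ge0. Qed.

Lemma dotv_eq0 x : dotv x x = 0 -> x = 0.
Proof.
move=> H; apply/rowP => k; rewrite mxE.
have H0 : forall k : 'I_N, true -> 0 <= x 0 k * x 0 k.
  by move=> *; rewrite -expr2 sqr_ge0.
have := psumr_eq0P H0 H (i:=k) isT.
by move/eqP; rewrite mulf_eq0 orbb => /eqP.
Qed.

End Aux.

Lemma part1 (R : realType) (N M : nat) (phi : 'I_M -> 'rV[R]_N) :
  norm_retrieval phi ->
     forall j : 'I_M,
       ~~ (phi j <= (\sum_(i | i != j) <<phi i>>)%MS)%MS ->
       forall i : 'I_M, i != j -> dotv (phi j) (phi i) = 0.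
Proof.
move=> NR j Hj i0 hi0.
set W := (\sum_(i | i != j) <<phi i>>)%MS in Hj.
set C := cokermx W.
have Hoth : forall i, i != j -> phi i *m C = 0.
  move=> i hi; apply/eqP; rewrite -submxE.
  by apply: (sumsmx_sup i) => //; rewrite genmxE.
have [k Hk] : exists k, (phi j *m C) 0 k != 0.
  suff /existsP : [exists k, (phi j *m C) 0 k != 0] by [].
  move: Hj; apply: contraR; rewrite negb_exists => /forallP H.
  rewrite submxE; apply/eqP/rowP => k.
  by move/negPn/eqP: (H k) ->; rewrite mxE.
pose z : 'rV[R]_N := \row_l C l k.
have dz : forall x, dotv x z = (x *m C) 0 k.
  by move=> x; rewrite /dotv mxE; apply: eq_bigr => l _; rewrite mxE.
set b := dotv (phi j) z.
have bE : b = (phi j *m C) 0 k by rewrite /b dz.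
have bn0 : b != 0 by rewrite bE.
have zi : forall i, i != j -> dotv (phi i) z = 0.
  by move=> i hi; rewrite dz Hoth // mxE.
set u := dotv z z *: phi j - b *: z.
have key : forall x, dotv x (phi j) * dotv x u = 0.
  move=> x; set a := dotv x (phi j).
  pose c := 2 * a / b.
  pose y := x - c *: z.
  have Hy : forall i, `|dotv x (phi i)| = `|dotv y (phi i)|.
    move=> i; rewrite /y dotvBl dotvZl.
    case: (eqVneq i j) => [->|hij].
      rewrite (dotvC z) -/b -/a /c.
      have -> : a - 2 * a / b * b = - a by field.
      by rewrite normrN.
    by rewrite (dotvC z) zi // mulr0 subr0.
  have := NR x y Hy; rewrite /normv => Hn.
  have Exy : dotv x x = dotv y y.
    by rewrite -(sqr_sqrtr (dotv_ge0 x)) Hn sqr_sqrtr // dotv_ge0.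
  move: Exy; rewrite /y !(dotvBl, dotvBr, dotvZl, dotvZr) (dotvC z x) => Exy.
  rewrite -/a.
  have E : c * (c * dotv z z - 2 * dotv x z) = 0.
    move/eqP: Exy; rewrite eq_sym -subr_eq0 => /eqP Exy.
    by apply: (eq_trans _ Exy); ring.
  have -> : a * (dotv z z * a - b * dotv x z) = (b ^+ 2 / 4) * (c * (c * dotv z z - 2 * dotv x z)).
    rewrite /c; field; by rewrite bn0.
  by rewrite E mulr0.
have pj0 : phi j != 0.
  by apply: contra Hj => /eqP ->; rewrite sub0mx.
have pp : 0 < dotv (phi j) (phi j).
  rewrite lt0r dotv_ge0 andbT; apply: contra pj0 => /eqP /dotv_eq0 ->; by [].
have uE : u = dotv z z *: phi j - b *: z by [].
clearbody u.
have Q1 := key (phi j); have Q2 := key u; have Q3 := key (phi j + u).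
rewrite !dotvDl (dotvC u (phi j)) in Q2 Q3.
set A := dotv (phi j) (phi j) in pp Q1 Q3 *; set B := dotv (phi j) u in Q1 Q2 Q3 *;
set D := dotv u u in Q2 Q3 *.
have HAB : A * D + B ^+ 2 = 0.
  have H : (A + B) * (B + D) - A * B - B * D = 0 by rewrite Q3 Q1 Q2 !subr0.
  by apply: eq_trans H; ring.
move/eqP: HAB; rewrite paddr_eq0 ?sqr_ge0 ?mulr_ge0 ?dotv_ge0 //.
case/andP; rewrite mulf_eq0 (gt_eqF pp) /= => /eqP /dotv_eq0 u0 _.
have : dotv u (phi i0) = 0 by rewrite u0 /dotv big1 // => l _; rewrite mxE mul0r.
rewrite uE dotvBl !dotvZl (dotvC z) zi // mulr0 subr0 => /eqP.
rewrite mulf_eq0 => /orP [/eqP/dotv_eq0 z0|/eqP //].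
by move: bn0; rewrite /b z0 /dotv big1 ?eqxx // => l _; rewrite mxE mulr0.
Qed.

Lemma free_notin (R : realType) (N M : nat) (phi : 'I_M -> 'rV[R]_N) j :
  row_free (fammx phi) ->
  ~~ (phi j <= (\sum_(i | i != j) <<phi i>>)%MS)%MS.
Proof.
move=> Hf; apply/negP => Hsub.
have S : (fammx phi <= (\sum_(i | i != j) <<phi i>>)%MS)%MS.
  apply/row_subP => i; rewrite rowK.
  case: (eqVneq i j) => [->//|hij].
  by apply: (sumsmx_sup i) => //; rewrite genmxE.
have r1 := mxrankS S.
have r2 : (\rank (\sum_(i | i != j) <<phi i>>)%MS <= \sum_(i | i != j) \rank <<phi i>>)%N.
  exact: (mxrank_sum_leqif _).1.
have r3 : (\sum_(i | i != j) \rank <<phi i>> <= \sum_(i | i != j) 1)%N.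
  by apply: leq_sum => i _; rewrite genmxE rank_leq_row.
move: Hf; rewrite /row_free => /eqP Hr.
rewrite sum1_card cardC1 card_ord in r3.
have := leq_trans r1 (leq_trans r2 r3); rewrite Hr.
by case: M j {phi Hsub S r1 r2 r3 Hr} => [[]//|m _]; rewrite ltnn.
Qed.

Lemma parseval (R : realType) (N M : nat) (phi : 'I_M -> 'rV[R]_N) :
  row_full (fammx phi) ->
  (forall i j : 'I_M, i != j -> dotv (phi i) (phi j) = 0) ->
  forall x, dotv x x = \sum_k dotv x (phi k) ^+ 2 / dotv (phi k) (phi k).
Proof.
move=> Hfull Ho x.
have /submxP [D xD] := submx_full x Hfull.
have xE : x = \sum_i D 0 i *: phi i.
  by rewrite xD mulmx_sum_row; apply: eq_bigr => i _; rewrite rowK.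
have Hk : forall k, dotv x (phi k) = D 0 k * dotv (phi k) (phi k).
  move=> k; rewrite xE dotv_suml (bigD1 k) //= big1 ?addr0 ?dotvZl //.
  by move=> i hik; rewrite dotvZl Ho ?mulr0.
rewrite {1}xE dotv_suml; apply: eq_bigr => k _.
rewrite dotvZl (dotvC (phi k) x) Hk.
have [->|nz] := eqVneq (dotv (phi k) (phi k)) 0.
  by rewrite !mulr0 invr0 mulr0.
by field.
Qed.

Theorem mainTheorem7 (R : realType) (N M : nat) (phi : 'I_M -> 'rV[R]_N) :
  (norm_retrieval phi ->
     forall j : 'I_M,
       ~~ (phi j <= (\sum_(i | i != j) <<phi i>>)%MS)%MS ->
       forall i : 'I_M, i != j -> dotv (phi j) (phi i) = 0)
  /\
  (is_basis phi ->
     (norm_retrieval phi <-> forall i j : 'I_M, i != j -> dotv (phi i) (phi j) = 0)).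
Proof.
split; first exact: part1.
move=> [Hfree Hfull]; split.
  move=> NR i j hij; apply: (@part1 _ _ _ phi NR i (@free_notin _ _ _ phi i Hfree)); by rewrite eq_sym.
move=> Ho x y H; rewrite /normv (@parseval _ _ _ phi Hfull Ho x) (@parseval _ _ _ phi Hfull Ho y).
rewrite (eq_bigr (fun k => dotv y (phi k) ^+ 2 / dotv (phi k) (phi k))) // => k _.
by rewrite -(real_normK (num_real (dotv x (phi k)))) H real_normK // num_real.
Qed.
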